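(* Let $A\in\mathbb{R}^{m\times N}$, $\eta\ge0$, let $x\in\mathbb{R}^N$ be nonzero, let $k\in\{1,\dots,N\}$, and let $y=Ax+\varepsilon$ with $\lVert\varepsilon\rVert_2\le\eta$. Let $1<q\le\infty$ and set $C_q(k,x)=\left(4k^{1-1/q}+s_q(x)^{1-1/q}\right)^{q/(q-1)}$. If $\rho_{q,C_q(k,x)}(A)>0$, then any solution $\hat x$ of $$\min_{z\in\mathbb{R}^N\setminus\{0\}}\frac{\lVert z\rVert_1}{\lVert z\rVert_q}\quad\text{subject to}\quad\lVert y-Az\rVert_2\le\eta$$ obeys $$\lVert\hat x-x\rVert_q\le\frac{2\eta}{\rho_{q,C_q(k,x)}(A)}+k^{1/q-1}\sigma_{k,1}(x),$$ $$\lVert\hat x-x\rVert_1\le\frac{\left(4k^{1-1/q}+2s_q(x)^{1-1/q}\right)\eta}{\rho_{q,C_q(k,x)}(A)}+\left(4+(s_q(x)/k)^{1-1/q}\right)\sigma_{k,1}(x).$$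
   Context: For nonzero $z\in\mathbb{R}^N$ and $q\in(1,\infty)$, $s_q(z)=\left(\lVert z\rVert_1/\lVert z\rVert_q\right)^{q/(q-1)}$ (so $s_q(z)^{1-1/q}=\lVert z\rVert_1/\lVert z\rVert_q$), and $s_\infty(z)=\lVert z\rVert_1/\lVert z\rVert_\infty$. For real $s\ge1$, $\rho_{q,s}(A)=\min\{\lVert Az\rVert_2/\lVert z\rVert_q: z\ne0,\ s_q(z)\le s\}$. For $q=\infty$ interpret $q/(q-1)=1$, $1-1/q=1$, $1/q-1=-1$. $\sigma_{k,1}(x)=\inf\{\lVert x-z\rVert_1: z\in\mathbb{R}^N \text{ has at most } k \text{ nonzero entries}\}$ is the $\ell_1$-error of best $k$-term approximation. *)

(* Defs.v *)
From HB Require Import structures.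
From mathcomp Require Import all_boot all_order all_algebra.
From mathcomp Require Import all_classical all_reals all_analysis.
Set Implicit Arguments. Unset Strict Implicit. Unset Printing Implicit Defensive.
Import Order.TTheory GRing.Theory Num.Theory.
Local Open Scope classical_set_scope.
Local Open Scope ring_scope.

Section Defs.
Variable R : realType.

Definition l1norm N (z : 'cV[R]_N) : R := \sum_i `|z i ord0|.
Definition l2norm N (z : 'cV[R]_N) : R := Num.sqrt (\sum_i (z i ord0) ^+ 2).
Definition linfnorm N (z : 'cV[R]_N) : R := \big[Num.max/0]_i `|z i ord0|.

(* q in (1, +oo] is an extended real; the value at -oo is irrelevant junk *)
Definition lqnorm (q : \bar R) N (z : 'cV[R]_N) : R :=
  match q with
  | +oo%E => linfnorm z
  | r%:E => (\sum_i `|z i ord0| `^ r) `^ r^-1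
  | -oo%E => 0
  end.

Definition qexp (q : \bar R) : R :=
  match q with r%:E => 1 - r^-1 | _ => 1 end.

Definition qconj (q : \bar R) : R :=
  match q with r%:E => r / (r - 1) | _ => 1 end.

Definition sq (q : \bar R) N (z : 'cV[R]_N) : R :=
  (l1norm z / lqnorm q z) `^ qconj q.

Definition rho (q : \bar R) (s : R) m N (A : 'M[R]_(m, N)) : R :=
  inf [set r | exists z : 'cV[R]_N,
         [/\ z != 0, sq q z <= s & r = l2norm (A *m z) / lqnorm q z]].

Definition sigma1 (k : nat) N (x : 'cV[R]_N) : R :=
  inf [set r | exists z : 'cV[R]_N,
         (#|[set i : 'I_N | z i ord0 != 0%R]%SET| <= k)%N /\ r = l1norm (x - z)].

Definition Cq (q : \bar R) (k : nat) N (x : 'cV[R]_N) : R :=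
  (4 * (k%:R `^ qexp q) + sq q x `^ qexp q) `^ qconj q.

Definition is_solution (q : \bar R) m N (A : 'M[R]_(m, N)) (y : 'cV[R]_m)
  (eta : R) (xhat : 'cV[R]_N) : Prop :=
  [/\ xhat != 0, l2norm (y - A *m xhat) <= eta &
      forall z : 'cV[R]_N, z != 0 -> l2norm (y - A *m z) <= eta ->
        l1norm xhat / lqnorm q xhat <= l1norm z / lqnorm q z].

End Defs.

(* Main.v *)
Require Import Defs.
From HB Require Import structures.
From mathcomp Require Import all_boot all_order all_algebra.
From mathcomp Require Import all_classical all_reals all_analysis.
From mathcomp Require Import ring lra.
Import Order.TTheory GRing.Theory Num.Theory.
Local Open Scope ring_scope.
Set Implicit Arguments. Unset Strict Implicit.

Section H.
Variable R : realType.

Lemma convp (p t x y : R) : 1 <= p -> 0 <= t <= 1 -> 0 <= x -> 0 <= y ->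
  (t * x + (1 - t) * y) `^ p <= t * x `^ p + (1 - t) * y `^ p.
Proof.
move=> p1 /andP[t0 t1] x0 y0.
have := @convex_powR R p p1 (Itv01 t0 t1) x y.
rewrite !inE /= !in_itv /= !andbT => /(_ x0 y0).
by rewrite !convRE.
Qed.

Lemma bern (p u : R) : 1 < p -> 0 <= u -> u <= u `^ p / p + (1 - p^-1).
Proof.
move=> p1 u0.
have p0 : 0 < p by apply: lt_trans p1.
have q0 : 0 < (1 - p^-1)^-1 by rewrite invr_gt0 subr_gt0 invf_lt1.
have := @conjugate_powR R u 1 p (1 - p^-1)^-1 u0 ler01 p0 q0.
rewrite invrK addrC subrK mulr1 powR1 => /(_ erefl).
by rewrite mul1r.
Qed.

Definition pn (r : R) {n} (f : 'I_n -> R) := (\sum_i `|f i| `^ r) `^ r^-1.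

Lemma pn_ge0 r n (f : 'I_n -> R) : 0 <= pn r f.
Proof. exact: powR_ge0. Qed.

Lemma pnK r n (f : 'I_n -> R) : 0 < r -> pn r f `^ r = \sum_i `|f i| `^ r.
Proof.
move=> r0; rewrite /pn -powRrM mulVf ?gt_eqF // powRr1 //.
by apply: sumr_ge0 => i _; exact: powR_ge0.
Qed.

Lemma pn_eq0 r n (f : 'I_n -> R) : 0 < r -> pn r f = 0 -> forall i, f i = 0.
Proof.
move=> r0 /powR_eq0_eq0 /eqP; rewrite psumr_eq0; last by move=> i _; exact: powR_ge0.
move=> /allP H i; have := H i (mem_index_enum i); rewrite implyTb => /eqP.
by move/powR_eq0_eq0/normr0_eq0.
Qed.

Lemma pn_scale r n (f : 'I_n -> R) c : 0 < r -> 0 <= c ->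
  pn r (fun i => c * f i) = c * pn r f.
Proof.
move=> r0 c0; rewrite /pn.
under eq_bigr do rewrite normrM (ger0_norm c0) powRM //.
rewrite -mulr_sumr powRM ?powR_ge0 //; last by apply: sumr_ge0 => i _; exact: powR_ge0.
by rewrite -powRrM mulfV ?gt_eqF // powRr1.
Qed.

Lemma mink_core r n (a b f : 'I_n -> R) (al bl : R) : (forall i, f i = a i + b i) ->
  1 <= r -> 0 < al -> 0 < bl ->
  \sum_i `|al^-1 * a i| `^ r = 1 -> \sum_i `|bl^-1 * b i| `^ r = 1 ->
  pn r (fun i => (al + bl)^-1 * f i) <= 1.
Proof.
move=> hf r1 al0 bl0 Sa Sb; have r0 : 0 < r by apply: lt_le_trans r1.
have g0 : 0 < al + bl by rewrite addr_gt0.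
have t0 : 0 <= al / (al + bl) by rewrite divr_ge0 // ltW.
have t1 : al / (al + bl) <= 1 by rewrite ler_pdivrMr // mul1r lerDl ltW.
have t1' : 1 - al / (al + bl) = bl / (al + bl).
  by rewrite -[1](mulfV (lt0r_neq0 g0)) -mulrBl addrC addKr.
rewrite /pn [leRHS](_ : _ = 1 `^ r^-1); last by rewrite powR1.
apply: ge0_ler_powR.
- by rewrite invr_ge0 ltW.
- by rewrite nnegrE; apply: sumr_ge0 => i _; exact: powR_ge0.
- by rewrite nnegrE.
apply: (@le_trans _ _ (\sum_i (al / (al + bl) * `|al^-1 * a i| `^ r + (1 - al / (al + bl)) * `|bl^-1 * b i| `^ r))).
  apply: ler_sum => i _.
  apply: le_trans (convp r1 _ _ _); rewrite ?t0 ?t1 //.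
  apply: ge0_ler_powR; rewrite ?nnegrE ?(ltW r0) //.
    by rewrite addr_ge0 // mulr_ge0 // subr_ge0.
  have ha : `|al^-1| = al^-1 by rewrite ger0_norm // invr_ge0 ltW.
  have hb : `|bl^-1| = bl^-1 by rewrite ger0_norm // invr_ge0 ltW.
  have hg : `|(al + bl)^-1| = (al + bl)^-1 by rewrite ger0_norm // invr_ge0 ltW.
  rewrite t1' hf !normrM ha hb hg.
  have -> : al / (al + bl) * (al^-1 * `|a i|) + bl / (al + bl) * (bl^-1 * `|b i|)
     = (al + bl)^-1 * (`|a i| + `|b i|).
    field; rewrite ?lt0r_neq0 //; apply/andP; split; exact: lt0r_neq0.
  by rewrite ler_pM2l ?invr_gt0 // ler_normD.
by rewrite big_split /= -!mulr_sumr Sa Sb !mulr1 addrC subrK.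
Qed.


Lemma pn_norm1 r n (a : 'I_n -> R) : 0 < r -> 0 < pn r a ->
  \sum_i `|(pn r a)^-1 * a i| `^ r = 1.
Proof.
move=> r0 al.
rewrite -(@pnK r _ (fun i => (pn r a)^-1 * a i) r0).
rewrite (@pn_scale r _ a (pn r a)^-1 r0); last by rewrite invr_ge0; exact: ltW al.
by rewrite mulVf ?(lt0r_neq0 al) // powR1.
Qed.

Lemma mink_pos r n (a b f : 'I_n -> R) : (forall i, f i = a i + b i) ->
  1 <= r -> 0 < pn r a -> 0 < pn r b -> pn r f <= pn r a + pn r b.
Proof.
move=> hf r1 al bl; have r0 : 0 < r by apply: lt_le_trans r1.
have := mink_core hf r1 al bl (pn_norm1 r0 al) (pn_norm1 r0 bl).
rewrite (@pn_scale r _ f (pn r a + pn r b)^-1 r0); last first.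
  by rewrite invr_ge0; apply: ltW; exact: (addr_gt0 al bl).
by rewrite ler_pdivrMl ?(addr_gt0 al bl) // mulr1.
Qed.

Lemma pn_add0 r n (a b f : 'I_n -> R) : (forall i, f i = a i + b i) -> 0 < r -> pn r a = 0 ->
  pn r f = pn r b.
Proof.
move=> hf r0 a0; rewrite /pn; congr (_ `^ _); apply: eq_bigr => i _.
by rewrite hf (pn_eq0 r0 a0) add0r.
Qed.

Lemma pminkowski r n (a b f : 'I_n -> R) : (forall i, f i = a i + b i) -> 1 <= r ->
  pn r f <= pn r a + pn r b.
Proof.
move=> hf r1; have r0 : 0 < r by apply: lt_le_trans r1.
have [a0|an0] := eqVneq (pn r a) 0.
  by rewrite (pn_add0 hf r0 a0) a0 add0r.
have [b0|bn0] := eqVneq (pn r b) 0.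
  have hf' : forall i, f i = b i + a i by move=> i; rewrite hf addrC.
  by rewrite (pn_add0 hf' r0 b0) b0 addr0.
have al : 0 < pn r a by rewrite lt0r an0 pn_ge0.
have bl : 0 < pn r b by rewrite lt0r bn0 pn_ge0.
exact: mink_pos hf r1 al bl.
Qed.
Lemma powRVr (M r : R) : 0 <= M -> (M^-1) `^ r = (M `^ r)^-1.
Proof.
move=> M0; rewrite -(powR_inv1 M0) -powRrM mulN1r powRN //.
Qed.

Lemma pmean_core r n (g : 'I_n -> R) (P : pred 'I_n) (M : R) : 1 < r -> 0 < M ->
  (forall i, 0 <= g i) ->
  \sum_(i | P i) g i <=
    M * ((\sum_(i | P i) g i `^ r) * (M `^ r)^-1 / r + #|P|%:R * (1 - r^-1)).
Proof.
move=> r1 M0 g0.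
have r0 : 0 < r by apply: lt_trans r1.
have hM : 0 <= M^-1 by rewrite invr_ge0; exact: ltW M0.
apply: (@le_trans _ _ (\sum_(i | P i) M * ((g i * M^-1) `^ r / r + (1 - r^-1)))).
  apply: ler_sum => i _.
  have hu : 0 <= g i * M^-1 by apply: mulr_ge0.
  have := bern r1 hu.
  move=> /(ler_wpM2l (ltW M0)) H; apply: le_trans H.
  rewrite mulrCA mulfV ?mulr1 //; exact: lt0r_neq0 M0.
rewrite -mulr_sumr ler_pM2l // big_split /= sumr_const.
under eq_bigr do rewrite (powRM _ (g0 _) hM) (powRVr _ (ltW M0)).
by rewrite -!mulr_suml mulr_natl.
Qed.

Lemma sum_sub_le n (g : 'I_n -> R) (P : pred 'I_n) : (forall i, 0 <= g i) ->
  \sum_(i | P i) g i <= \sum_i g i.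
Proof.
move=> g0; rewrite big_mkcond /=; apply: ler_sum => i _.
by case: (P i).
Qed.

Lemma pmean_arith (r p c S T : R) (m : nat) : 1 < r -> 0 < p -> 0 < c ->
  0 <= S -> S <= T -> T = p `^ r -> m%:R <= c ->
  p * c `^ (- r^-1) * (S * ((p * c `^ (- r^-1)) `^ r)^-1 / r + m%:R * (1 - r^-1))
  <= c `^ (1 - r^-1) * p.
Proof.
move=> r1 p0 c0 S0 ST hT mc.
have r0 : 0 < r by apply: lt_trans r1.
have e1 : (p * c `^ (- r^-1)) `^ r = T / c.
  rewrite powRM ?(ltW p0) ?powR_ge0 // -powRrM mulNr mulVf ?(lt0r_neq0 r0) //.
  by rewrite (powR_inv1 (ltW c0)) hT.
rewrite e1.
have T0 : 0 < T by rewrite hT powR_gt0.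
have e2 : c `^ (1 - r^-1) = c * c `^ (- r^-1).
  by rewrite powRD ?powRr1 ?(ltW c0) // (lt0r_neq0 c0) implybT.
rewrite e2 (mulrC _ p) (mulrC c) mulrA.
apply: ler_wpM2l; first by rewrite mulr_ge0 ?powR_ge0 // ltW.
have h1 : S * (T / c)^-1 <= c.
  by rewrite invf_div mulrA ler_pdivrMr // mulrC ler_pM2l.
have h2 : m%:R * (1 - r^-1) <= c * (1 - r^-1).
  by rewrite ler_pM2r // subr_gt0 invf_lt1.
have h3 : S * (T / c)^-1 / r <= c / r by rewrite ler_pM2r // invr_gt0.
apply: le_trans (lerD h3 h2) _.
by rewrite -mulrDr addrC subrK mulr1.
Qed.

Lemma pmean r n (f : 'I_n -> R) (P : pred 'I_n) (k : nat) : 1 < r ->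
  (#|P| <= k)%N -> (1 <= k)%N ->
  \sum_(i | P i) `|f i| <= k%:R `^ (1 - r^-1) * pn r f.
Proof.
move=> r1 Pk k1.
have r0 : 0 < r by apply: lt_trans r1.
have c0 : 0 < k%:R :> R by rewrite ltr0n.
have [p0|pn0] := eqVneq (pn r f) 0.
  rewrite p0 mulr0 big1 // => i _.
  by rewrite (pn_eq0 r0 p0) normr0.
have p0 : 0 < pn r f by rewrite lt0r pn0 pn_ge0.
have M0 : 0 < pn r f * k%:R `^ (- r^-1) by rewrite mulr_gt0 // powR_gt0.
apply: le_trans (pmean_core P r1 M0 (fun i => normr_ge0 (f i))) _.
apply: (@pmean_arith r (pn r f) k%:R _ (\sum_i `|f i| `^ r)) => //.
- by apply: sumr_ge0 => i _; exact: powR_ge0.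
- by apply: sum_sub_le => i; exact: powR_ge0.
- by rewrite (pnK f r0).
- by rewrite ler_nat.
Qed.
End H.

Section N.
Variable R : realType.

Lemma cv_eq0 N (z : 'cV[R]_N) : (forall i, z i ord0 = 0) -> z = 0.
Proof.
move=> h; apply/matrixP => i j; rewrite (ord1 j) h mxE //.
Qed.

Lemma l1_ge0 N (z : 'cV[R]_N) : 0 <= l1norm z.
Proof. by apply: sumr_ge0 => i _. Qed.

Lemma linf_ge0 N (z : 'cV[R]_N) : 0 <= linfnorm z.
Proof. exact: bigmax_ge_id. Qed.

Lemma linf_ge N (z : 'cV[R]_N) i : `|z i ord0| <= linfnorm z.
Proof. exact: (le_bigmax_cond _ (fun i => `|z i ord0|) (erefl true)). Qed.

Lemma linf_le N (z : 'cV[R]_N) c : 0 <= c -> (forall i, `|z i ord0| <= c) -> linfnorm z <= c.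
Proof. by move=> c0 h; apply: bigmax_le. Qed.

Lemma lq_ge0 q N (z : 'cV[R]_N) : 0 <= lqnorm q z.
Proof. by case: q => [r| |] /=; rewrite ?powR_ge0 ?linf_ge0. Qed.


Lemma lq_pn r N (z : 'cV[R]_N) : lqnorm r%:E z = pn r (fun i => z i ord0).
Proof. by []. Qed.

Lemma lq_gt0 q N (z : 'cV[R]_N) : (1%:E < q)%E -> z != 0 -> 0 < lqnorm q z.
Proof.
case: q => [r| |] // r1 z0.
- rewrite lte_fin in r1; have r0 : 0 < r by apply: lt_trans r1.
  rewrite lq_pn lt0r pn_ge0 andbT; apply/negP => /eqP p0.
  by move/negP: z0; apply; apply/eqP/cv_eq0; exact: pn_eq0 r0 p0.
- case: (pselect (exists i, z i ord0 != 0)) => [[i zi]|h]; last first.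
    have zz : z = 0.
      apply: cv_eq0 => i.
      by case: (eqVneq (z i ord0) 0) => // hi; exfalso; apply: h; exists i.
    by rewrite zz eqxx in z0.
  by apply: lt_le_trans (linf_ge z i); rewrite normr_gt0.
Qed.

Lemma lq_tri q N (a b : 'cV[R]_N) : (1%:E < q)%E ->
  lqnorm q (a + b) <= lqnorm q a + lqnorm q b.
Proof.
case: q => [r| |] // r1.
- rewrite lte_fin in r1; rewrite !lq_pn.
  apply: pminkowski; last exact: ltW.
  by move=> i; rewrite mxE.
- apply: linf_le; first by rewrite addr_ge0 ?linf_ge0.
  move=> i; rewrite mxE; apply: le_trans (ler_normD _ _) _.
  by apply: lerD; exact: linf_ge.
Qed.

Lemma lq_sub q N (z : 'cV[R]_N) (P : pred 'I_N) k : (1%:E < q)%E ->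
  (#|P| <= k)%N -> (1 <= k)%N ->
  \sum_(i | P i) `|z i ord0| <= k%:R `^ qexp q * lqnorm q z.
Proof.
case: q => [r| |] // r1 Pk k1.
- rewrite lte_fin in r1; rewrite lq_pn /=.
  exact: pmean.
- rewrite /= powRr1 ?ler0n //.
  apply: le_trans (_ : \sum_(i | P i) linfnorm z <= _).
    by apply: ler_sum => i _; exact: linf_ge.
  rewrite sumr_const mulr_natl. apply: ler_wpMn2l; [exact: linf_ge0 | exact: Pk].
Qed.

Lemma qexp_gt0 (q : \bar R) : (1%:E < q)%E -> 0 < qexp q.
Proof.
case: q => [r| |] //= r1; rewrite lte_fin in r1.
by rewrite subr_gt0 invf_lt1 // (lt_trans _ r1).
Qed.

Lemma qconj_gt0 (q : \bar R) : (1%:E < q)%E -> 0 < qconj q.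
Proof.
case: q => [r| |] //= r1; rewrite lte_fin in r1.
by rewrite divr_gt0 ?subr_gt0 // (lt_trans _ r1).
Qed.

Lemma qconjM (q : \bar R) : (1%:E < q)%E -> qconj q * qexp q = 1.
Proof.
case: q => [r| |] //= r1; last by rewrite mulr1.
rewrite lte_fin in r1.
have r0 : r != 0 by rewrite gt_eqF // (lt_trans _ r1).
have r10 : r - 1 != 0 by rewrite subr_eq0 gt_eqF.
by field; rewrite r0 r10.
Qed.

Lemma l2_pn m (z : 'cV[R]_m) : l2norm z = pn 2 (fun i => z i ord0).
Proof.
rewrite /l2norm /pn powR12_sqrt; last by apply: sumr_ge0 => i _; exact: powR_ge0.
congr (Num.sqrt _); apply: eq_bigr => i _.
by rewrite powR_mulrn ?normr_ge0 // real_normK // num_real.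
Qed.

Lemma l2_ge0 m (z : 'cV[R]_m) : 0 <= l2norm z.
Proof. exact: sqrtr_ge0. Qed.

Lemma l2_triB m (a b : 'cV[R]_m) : l2norm (a - b) <= l2norm a + l2norm b.
Proof.
rewrite !l2_pn.
have -> : pn 2 (fun i => b i ord0) = pn 2 (fun i => - b i ord0).
  by rewrite /pn; congr (_ `^ _); apply: eq_bigr => i _; rewrite normrN.
apply: pminkowski; last by rewrite ler1n.
by move=> i; rewrite !mxE.
Qed.
End N.

Section M.
Variable R : realType.

Lemma key_pw (a b zi : R) (Pi : bool) : (~~ Pi -> zi = 0) ->
  `|b - a| <= (`|b| - `|a|) + (if Pi then 2 * `|b - a| else 0) + 2 * `|a - zi|.
Proof.
move=> hz.
have h1 : `|a| <= `|b| + `|a - b| by rewrite -{1}(subrKC b a) ler_normD.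
have h2 : `|b - a| <= `|b| + `|a| by apply: ler_normB.
have h3 : `|a - b| = `|b - a| by rewrite distrC.
have h4 : 0 <= `|a - zi| by [].
case: Pi hz => [_|/(_ erefl) ->]; first by lra.
rewrite subr0; lra.
Qed.

Lemma l1_split N (xhat x z : 'cV[R]_N) :
  l1norm (xhat - x) <= (l1norm xhat - l1norm x)
     + 2 * \sum_(i | z i ord0 != 0) `|(xhat - x) i ord0| + 2 * l1norm (x - z).
Proof.
rewrite /l1norm -sumrB !mulr_sumr [\sum_(i | z i ord0 != 0) _]big_mkcond /= -!big_split /=.
apply: ler_sum => i _; rewrite !mxE.
apply: key_pw => /negPn /eqP //.
Qed.

Lemma lq_zero (q : \bar R) N : (1%:E < q)%E -> lqnorm q (0 : 'cV[R]_N) = 0.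
Proof.
case: q => [r| |] // r1 /=.
- rewrite lte_fin in r1; have r0 : r != 0 by rewrite gt_eqF // (lt_trans _ r1).
  rewrite big1 ?powR0 ?invr_neq0 // => i _.
  by rewrite mxE normr0 powR0.
- apply/eqP; rewrite eq_le linf_ge0 andbT; apply: linf_le => // i.
  by rewrite mxE normr0.
Qed.

Lemma inf_bound (D : set R) (L a b : R) : 0 < b -> nonempty D ->
  (forall d, D d -> L <= a + b * d) -> L <= a + b * inf D.
Proof.
move=> b0 D0 H.
have : (L - a) / b <= inf D.
  apply: lb_le_inf => // d Dd; rewrite ler_pdivrMr // mulrC lerBlDl; exact: H.
by rewrite ler_pdivrMr // mulrC lerBlDl.
Qed.
End M.

Lemma main_z (R : realType) (m N : nat) (A : 'M[R]_(m, N)) (eta : R)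
  (x : 'cV[R]_N) (k : nat) (eps : 'cV[R]_m) (y : 'cV[R]_m) (q : \bar R)
  (xhat : 'cV[R]_N) (z : 'cV[R]_N) :
  0 <= eta -> x != 0 -> (1 <= k)%N -> (k <= N)%N ->
  y = A *m x + eps -> l2norm eps <= eta ->
  (1%:E < q)%E ->
  0 < rho q (Cq q k x) A ->
  is_solution q A y eta xhat ->
  (#|[set i : 'I_N | z i ord0 != 0%R]%SET| <= k)%N ->
  lqnorm q (xhat - x) <=
    2 * eta / rho q (Cq q k x) A + k%:R `^ (- qexp q) * l1norm (x - z) /\
  l1norm (xhat - x) <=
    (4 * k%:R `^ qexp q + 2 * sq q x `^ qexp q) * eta / rho q (Cq q k x) A
    + (4 + (sq q x / k%:R) `^ qexp q) * l1norm (x - z).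
Proof.
move=> eta0 x0 k1 kN hy heps q1 rho0 [xh0 hxh hmin] hz.
have e0 := qexp_gt0 q1; have c0 := qconj_gt0 q1; have ce := qconjM q1.
have lqx : 0 < lqnorm q x := lq_gt0 q1 x0.
have lqxh : 0 < lqnorm q xhat := lq_gt0 q1 xh0.
have feas : l2norm (y - A *m x) <= eta.
  by rewrite (_ : y - A *m x = eps) // hy addrC addKr.
have rat := hmin x x0 feas.
pose rx := l1norm x / lqnorm q x.
have rx0 : 0 <= rx by apply: divr_ge0; [exact: l1_ge0 | exact: lq_ge0].
have sE : sq q x `^ qexp q = rx by rewrite /sq -powRrM ce powRr1.
have hxh_eq : xhat = x + (xhat - x) by rewrite addrCA subrr addr0.
have tri : lqnorm q xhat <= lqnorm q x + lqnorm q (xhat - x).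
  by rewrite {1}hxh_eq; exact: lq_tri.
have C : l1norm xhat <= l1norm x + rx * lqnorm q (xhat - x).
  rewrite -(divfK (lt0r_neq0 lqxh) (l1norm xhat)).
  apply: le_trans (_ : rx * lqnorm q xhat <= _).
    by apply: ler_wpM2r => //; exact: ltW.
  apply: le_trans (ler_wpM2l rx0 tri) _.
  by rewrite mulrDr /rx divfK ?(lt0r_neq0 lqx).
have Ah : l2norm (A *m (xhat - x)) <= 2 * eta.
  have -> : A *m (xhat - x) = (y - A *m x) - (y - A *m xhat).
    by rewrite mulmxBr opprB [RHS]addrC [RHS]addrA subrK.
  apply: le_trans (l2_triB _ _) _; lra.
have card : (#|(fun i : 'I_N => z i ord0 != 0%R)| <= k)%N.
  by move: hz; rewrite cardsE.
have S := lq_sub (xhat - x) q1 card k1.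
have split := l1_split xhat x z.
pose K := k%:R `^ qexp q.
have K0 : 0 < K by rewrite powR_gt0 // ltr0n.
pose Ki := k%:R `^ (- qexp q).
have KKi : K * Ki = 1 by rewrite /K /Ki powRN mulfV // (lt0r_neq0 K0).
have Ki0 : 0 < Ki by rewrite powR_gt0 // ltr0n.
have d0 : 0 <= l1norm (x - z) by exact: l1_ge0.
have main1 : l1norm (xhat - x) <= (2 * K + rx) * lqnorm q (xhat - x) + 2 * l1norm (x - z).
  rewrite mulrDl; rewrite -/K in S; lra.
have rr0 : 0 <= 2 * eta / rho q (Cq q k x) A.
  by rewrite divr_ge0 ?mulr_ge0 // ltW.
have B : lqnorm q (xhat - x) <= 2 * eta / rho q (Cq q k x) A + Ki * l1norm (x - z).
  case: (lerP (l1norm (xhat - x)) ((4 * K + rx) * lqnorm q (xhat - x))) => [c1|c2].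
    have part : lqnorm q (xhat - x) <= 2 * eta / rho q (Cq q k x) A.
      case: (eqVneq (xhat - x) 0) => [h0|hn0]; first by rewrite h0 lq_zero.
      have lqh0 : 0 < lqnorm q (xhat - x) := lq_gt0 q1 hn0.
      have sqh : sq q (xhat - x) <= Cq q k x.
        rewrite /Cq sE {1}/sq; apply: (ge0_ler_powR (ltW c0)).
        - by rewrite nnegrE divr_ge0 ?l1_ge0 ?lq_ge0.
        - by rewrite nnegrE; apply: addr_ge0 => //; apply: mulr_ge0 => //; exact: powR_ge0.
        by rewrite ler_pdivrMr.
      have rle : rho q (Cq q k x) A <= l2norm (A *m (xhat - x)) / lqnorm q (xhat - x).
        apply: ge_inf.
          exists 0 => r [z' [_ _ ->]]; apply: divr_ge0; [exact: l2_ge0 | exact: lq_ge0].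
        by exists (xhat - x); split.
      rewrite ler_pdivlMr // mulrC; apply: le_trans Ah.
      by rewrite -ler_pdivlMr.
    apply: le_trans part _; rewrite lerDl; apply: mulr_ge0 => //; exact: ltW Ki0.
  have : K * lqnorm q (xhat - x) <= l1norm (x - z).
    rewrite mulrDl in c2; lra.
  move=> h1.
  have h2 : lqnorm q (xhat - x) <= Ki * l1norm (x - z).
    by rewrite -(ler_pM2l K0) mulrA KKi mul1r.
  lra.
split; first exact: B.
have hsk : (sq q x / k%:R) `^ qexp q = rx * Ki.
  rewrite powRM; last 2 first.
  - exact: powR_ge0.
  - by rewrite invr_ge0 ler0n.
  by rewrite sE (powRVr _ (ler0n _ k)) /Ki powRN.
rewrite sE hsk -/K.
have cK : 0 <= 2 * K + rx by rewrite addr_ge0 // mulr_ge0 // ltW.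
have B3 := ler_wpM2l cK B.
have id1 : (2 * K + rx) * (2 * eta / rho q (Cq q k x) A + Ki * l1norm (x - z)) =
  (4 * K + 2 * rx) * eta / rho q (Cq q k x) A + 2 * (K * Ki) * l1norm (x - z)
  + rx * Ki * l1norm (x - z) by ring.
rewrite KKi in id1.
rewrite id1 in B3.
have rkd : 0 <= rx * Ki * l1norm (x - z).
  by apply: mulr_ge0 => //; apply: mulr_ge0 => //; exact: ltW Ki0.
rewrite mulrDl; lra.
Qed.

Unset Implicit Arguments. Set Strict Implicit.
Theorem theorem2 (R : realType) (m N : nat) (A : 'M[R]_(m, N)) (eta : R)
  (x : 'cV[R]_N) (k : nat) (eps : 'cV[R]_m) (y : 'cV[R]_m) (q : \bar R)
  (xhat : 'cV[R]_N) :
  0 <= eta -> x != 0 -> (1 <= k)%N -> (k <= N)%N ->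
  y = A *m x + eps -> l2norm eps <= eta ->
  (1%:E < q)%E ->
  0 < rho q (Cq q k x) A ->
  is_solution q A y eta xhat ->
  lqnorm q (xhat - x) <=
    2 * eta / rho q (Cq q k x) A + k%:R `^ (- qexp q) * sigma1 k x /\
  l1norm (xhat - x) <=
    (4 * k%:R `^ qexp q + 2 * sq q x `^ qexp q) * eta / rho q (Cq q k x) A
    + (4 + (sq q x / k%:R) `^ qexp q) * sigma1 k x.
Proof.
move=> eta0 x0 k1 kN hy heps q1 rho0 sol.
have ne : nonempty [set r | exists z : 'cV[R]_N,
         (#|[set i : 'I_N | z i ord0 != 0%R]%SET| <= k)%N /\ r = l1norm (x - z)].
  exists (l1norm (x - 0)); exists 0; split => //.
  rewrite (_ : [set i : 'I_N | (0 : 'cV[R]_N) i ord0 != 0%R]%SET = finset.set0) ?cards0 //.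
  by apply/setP => i; rewrite !inE mxE eqxx.
rewrite /sigma1; split.
- apply: inf_bound => //; first by rewrite powR_gt0 // ltr0n.
  move=> d [z [hz ->]].
  exact: (main_z eta0 x0 k1 kN hy heps q1 rho0 sol hz).1.
- apply: inf_bound => //.
    by apply: lt_le_trans (_ : 0 < 4) _ => //; rewrite lerDl powR_ge0.
  move=> d [z [hz ->]].
  exact: (main_z eta0 x0 k1 kN hy heps q1 rho0 sol hz).2.
Qed.
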